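(* Let $(X,d,W)$ be a UCW-hyperbolic space with monotone modulus of uniform convexity $\eta$, $C\subseteq X$ nonempty and convex, $\mu\ge1$, and $T:C\to C$ satisfying condition $(E_\mu)$. Let $L\in\mathbb{N}$, $L\ge2$, $(\lambda_n)\subseteq[1/L,1-1/L]$, $x\in C$ and $x_0=x$, $x_{n+1}=(1-\lambda_n)x_n+\lambda_nTx_n$. Let $b>0$ be such that for every $\gamma>0$ there exists $p\in C$ with $d(x,p)\le b$ and $d(p,Tp)\le\gamma$. Then for every $k\in\mathbb{N}$ and $g:\mathbb{N}\to\mathbb{N}$ there exists $N\le\Phi^+$ such that $d(x_m,Tx_m)\le\frac1{k+1}$ for all $m\in[N,N+g(N)]$, where $\Phi^+=h^{(M)}(0)$ is the $M$-fold iterate of $h(n)=g(n)+n+1$ applied to $0$, $M=\lceil3(b+1)/\theta\rceil$ and $\theta=\frac1{4(k+1)L^2}\eta\left(b+1,\frac1{4(k+1)(b+1)}\right)$. If moreover $\eta(r,\varepsilon)\ge\varepsilon\cdot\tilde\eta(r,\varepsilon)$ with $\tilde\eta$ increasing in $\varepsilon$, the same holds with $\eta$ replaced by $\tilde\eta$ in the definition of $\theta$.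
   Context: A $W$-hyperbolic space is a metric space $(X,d)$ with $W:X\times X\times[0,1]\to X$, writing $(1-\lambda)x+\lambda y:=W(x,y,\lambda)$, such that for all $x,y,z,w\in X$, $\lambda,\tilde\lambda\in[0,1]$: $d(z,W(x,y,\lambda))\le(1-\lambda)d(z,x)+\lambda d(z,y)$; $d(W(x,y,\lambda),W(x,y,\tilde\lambda))=|\lambda-\tilde\lambda|d(x,y)$; $W(x,y,\lambda)=W(y,x,1-\lambda)$; $d(W(x,z,\lambda),W(y,w,\lambda))\le(1-\lambda)d(x,y)+\lambda d(z,w)$. It is uniformly convex with modulus $\eta:(0,\infty)\times(0,2]\to(0,1]$ if for all $r>0$, $\varepsilon\in(0,2]$, $a,x,y\in X$: $d(x,a)\le r$, $d(y,a)\le r$, $d(x,y)\ge\varepsilon r$ imply $d(\frac12x+\frac12y,a)\le(1-\eta(r,\varepsilon))r$. It is UCW-hyperbolic if this holds with $\eta$ monotone, i.e. nonincreasing in the first argument. $C$ is convex if $W(x,y,\lambda)\in C$ for $x,y\in C$. $T$ satisfies condition $(E_\mu)$ if $d(x,Ty)\le\mu d(Tx,x)+d(x,y)$ for all $x,y\in C$. *)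

(* Defs.v *)
From Stdlib Require Import Reals Lra Lia ZArith.
Open Scope R_scope.

Definition metric_space {X : Type} (d : X -> X -> R) : Prop :=
  (forall x y, d x y = 0 <-> x = y) /\
  (forall x y, d x y = d y x) /\
  (forall x y z, d x z <= d x y + d y z).

(* W-hyperbolic space (Kohlenbach); W x y l stands for (1-l)x + l y *)
Definition W_hyperbolic {X : Type} (d : X -> X -> R) (W : X -> X -> R -> X) : Prop :=
  metric_space d /\
  (forall x y z l, 0 <= l <= 1 ->
     d z (W x y l) <= (1 - l) * d z x + l * d z y) /\
  (forall x y l l', 0 <= l <= 1 -> 0 <= l' <= 1 ->
     d (W x y l) (W x y l') = Rabs (l - l') * d x y) /\
  (forall x y l, 0 <= l <= 1 -> W x y l = W y x (1 - l)) /\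
  (forall x y z w l, 0 <= l <= 1 ->
     d (W x z l) (W y w l) <= (1 - l) * d x y + l * d z w).

Definition modulus_uc {X : Type} (d : X -> X -> R) (W : X -> X -> R -> X)
  (eta : R -> R -> R) : Prop :=
  (forall r e, 0 < r -> 0 < e <= 2 -> 0 < eta r e <= 1) /\
  (forall r e a x y, 0 < r -> 0 < e <= 2 ->
     d x a <= r -> d y a <= r -> d x y >= e * r ->
     d (W x y (1/2)) a <= (1 - eta r e) * r).

Definition monotone_modulus (eta : R -> R -> R) : Prop :=
  forall r s e, 0 < s <= r -> 0 < e <= 2 -> eta r e <= eta s e.

Definition UCW_hyperbolic {X : Type} (d : X -> X -> R) (W : X -> X -> R -> X)
  (eta : R -> R -> R) : Prop :=
  W_hyperbolic d W /\ modulus_uc d W eta /\ monotone_modulus eta.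

Definition convex_set {X : Type} (W : X -> X -> R -> X) (C : X -> Prop) : Prop :=
  forall x y l, C x -> C y -> 0 <= l <= 1 -> C (W x y l).

Definition condition_E {X : Type} (d : X -> X -> R) (C : X -> Prop)
  (T : X -> X) (mu : R) : Prop :=
  forall x y, C x -> C y -> d x (T y) <= mu * d (T x) x + d x y.

Fixpoint KM {X : Type} (W : X -> X -> R -> X) (T : X -> X) (lam : nat -> R)
  (x : X) (n : nat) : X :=
  match n with
  | O => x
  | S n' => W (KM W T lam x n') (T (KM W T lam x n')) (lam n')
  end.

(* ceiling of a real, as a natural number (0 for nonpositive reals) *)
Definition nat_ceil (x : R) : nat := Z.to_nat (- Int_part (- x)).

(* theta, given the value v = eta(b+1, 1/(4(k+1)(b+1))) *)
Definition theta_val (k L : nat) (v : R) : R :=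
  / (4 * INR (S k) * (INR L) ^ 2) * v.

Definition eps_arg (b : R) (k : nat) : R := / (4 * INR (S k) * (b + 1)).

Definition Phi_plus (b : R) (k L : nat) (g : nat -> nat) (eta : R -> R -> R) : nat :=
  let theta := theta_val k L (eta (b + 1) (eps_arg b k)) in
  let M := nat_ceil (3 * (b + 1) / theta) in
  Nat.iter M (fun n => (g n + n + 1)%nat) 0%nat.

(* Main.v *)
Require Import Defs.
From Stdlib Require Import Reals Lra Lia ZArith Classical.
Open Scope R_scope.

Lemma d_nonneg {X} (d : X -> X -> R) : metric_space d -> forall x y, 0 <= d x y.
Proof.
  intros [H1 [H2 H3]] x y. pose proof (H3 x y x) as H. rewrite (H2 y x) in H.
  assert (d x x = 0) by (apply H1; reflexivity). lra.
Qed.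

Lemma W_0 {X} (d : X -> X -> R) W : W_hyperbolic d W -> forall x y, W x y 0 = x.
Proof.
  intros HW x y. pose proof HW as [Hm [A1 _]]. pose proof Hm as [Hd [Hs _]].
  pose proof (d_nonneg d Hm) as Hn.
  specialize (A1 x y x 0 ltac:(lra)). assert (d x x = 0) by (apply Hd; reflexivity).
  symmetry. apply Hd. pose proof (Hn x (W x y 0)). pose proof (Hn x y). lra.
Qed.

Lemma W_1 {X} (d : X -> X -> R) W : W_hyperbolic d W -> forall x y, W x y 1 = y.
Proof.
  intros HW x y. pose proof HW as [Hm [A1 [A2 [A3 A4]]]].
  rewrite A3 by lra. replace (1-1) with 0 by ring. apply (W_0 d W HW).
Qed.

Lemma dist_left {X} (d : X -> X -> R) W : W_hyperbolic d W ->
  forall x y l, 0 <= l <= 1 -> d x (W x y l) = l * d x y.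
Proof.
  intros HW x y l Hl. pose proof HW as [Hm [A1 [A2 [A3 A4]]]]. pose proof Hm as [Hd [Hs _]].
  pose proof (A2 x y l 0 Hl ltac:(lra)) as H. rewrite (W_0 d W HW) in H.
  rewrite Hs, H. rewrite Rabs_right by lra. ring.
Qed.

Lemma dist_right {X} (d : X -> X -> R) W : W_hyperbolic d W ->
  forall x y l, 0 <= l <= 1 -> d (W x y l) y = (1 - l) * d x y.
Proof.
  intros HW x y l Hl. pose proof HW as [Hm [A1 [A2 [A3 A4]]]].
  pose proof (A2 x y l 1 Hl ltac:(lra)) as H. rewrite (W_1 d W HW) in H.
  rewrite H. rewrite Rabs_left1 by lra. ring.
Qed.

Lemma geo_unique {X} (d : X -> X -> R) W eta : W_hyperbolic d W -> modulus_uc d W eta ->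
  forall x y z z' l, 0 < l < 1 ->
  d x z = l * d x y -> d z y = (1-l) * d x y ->
  d x z' = l * d x y -> d z' y = (1-l) * d x y -> z = z'.
Proof.
  intros HW [Hpos Huc] x y z z' l Hl H1 H2 H3 H4.
  pose proof HW as [Hm [A1 [A2 [A3 A4]]]].
  pose proof Hm as [Hd [Hs Ht]].
  pose proof (d_nonneg d Hm) as Hn.
  destruct (Req_dec (d x y) 0) as [E|E].
  - assert (x = z) by (apply Hd; rewrite H1, E; ring).
    assert (x = z') by (apply Hd; rewrite H3, E; ring). congruence.
  - destruct (Req_dec (d z z') 0) as [E'|E']. { apply Hd; exact E'. }
    exfalso.
    assert (Dp : 0 < d x y) by (pose proof (Hn x y); lra).
    assert (Dz : 0 < d z z') by (pose proof (Hn z z'); lra).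
    set (r := l * d x y).
    assert (rp : 0 < r) by (unfold r; nra).
    set (w := W z z' (1/2)).
    assert (Hzz : d z z' <= 2 * r).
    { pose proof (Ht z x z') as H. rewrite (Hs z x) in H. unfold r; lra. }
    set (e := d z z' / r).
    assert (Her : e * r = d z z') by (unfold e; field; lra).
    assert (He : 0 < e <= 2).
    { split. unfold e. apply Rdiv_lt_0_compat; lra. nra. }
    assert (Hzx : d z x <= r) by (rewrite Hs; unfold r; lra).
    assert (Hz'x : d z' x <= r) by (rewrite Hs; unfold r; lra).
    assert (Hzz' : d z z' >= e * r) by lra.
    pose proof (Huc r e x z z' rp He Hzx Hz'x Hzz') as U.
    pose proof (Hpos r e rp He) as Hp.
    pose proof (A1 z z' y (1/2) ltac:(lra)) as Hy.
    rewrite (Hs y z), (Hs y z') in Hy.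
    pose proof (Ht x w y) as Htr.
    rewrite (Hs x w) in Htr. fold w in Hy, U.
    rewrite (Hs y w) in Hy.
    assert (0 < eta r e * r) by nra.
    unfold r in *. nra.
Qed.

Lemma conv_half {X} (d : X -> X -> R) W eta : W_hyperbolic d W -> modulus_uc d W eta ->
  forall x y a r e l, 0 < r -> 0 < e <= 2 -> 0 < l <= 1/2 ->
  d x a <= r -> d y a <= r -> d x y >= e * r ->
  d (W x y l) a <= (1 - 2 * l * eta r e) * r.
Proof.
  intros HW HU x y a r e l Hr He Hl Hxa Hya Hxy.
  pose proof HW as [Hm [A1 [A2 [A3 A4]]]]. pose proof Hm as [Hd [Hs Ht]].
  pose proof (d_nonneg d Hm) as Hn. pose proof HU as [Hpos Huc].
  set (m := W x y (1/2)).
  assert (Hm1 : d m a <= (1 - eta r e) * r) by (apply Huc; auto).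
  assert (Heq : W x y l = W x m (2*l)).
  { apply (geo_unique d W eta HW HU x y (W x y l) (W x m (2*l)) l); try lra.
    - apply (dist_left d W HW); lra.
    - apply (dist_right d W HW); lra.
    - rewrite (dist_left d W HW) by lra. unfold m. rewrite (dist_left d W HW) by lra. lra.
    - assert (Hym : d y m = 1/2 * d x y)
        by (rewrite Hs; unfold m; rewrite (dist_right d W HW) by lra; lra).
      apply Rle_antisym.
      + pose proof (A1 x m y (2*l) ltac:(lra)) as H. rewrite Hs.
        rewrite (Hs y x), Hym in H. nra.
      + pose proof (Ht x (W x m (2*l)) y) as H. rewrite (dist_left d W HW) in H by lra.
        assert (d x m = 1/2 * d x y) by (unfold m; rewrite (dist_left d W HW) by lra; lra). nra. }
  rewrite Heq. rewrite Hs.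
  pose proof (A1 x m a (2*l) ltac:(lra)) as H.
  rewrite (Hs a x), (Hs a m) in H.
  assert ((1 - 2*l) * d x a <= (1-2*l) * r) by (apply Rmult_le_compat_l; lra).
  assert (2*l * d m a <= 2*l * ((1 - eta r e)*r)) by (apply Rmult_le_compat_l; lra).
  lra.
Qed.

Lemma conv_gen {X} (d : X -> X -> R) W eta : W_hyperbolic d W -> modulus_uc d W eta ->
  forall x y a r e l Lr, 2 <= Lr -> / Lr <= l <= 1 - / Lr -> 0 < r -> 0 < e <= 2 ->
  d x a <= r -> d y a <= r -> d x y >= e * r ->
  d (W x y l) a <= r - 2 * / Lr * eta r e * r.
Proof.
  intros HW HU x y a r e l Lr HL Hl Hr He Hxa Hya Hxy.
  pose proof HW as [Hm [A1 [A2 [A3 A4]]]]. pose proof Hm as [Hd [Hs Ht]].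
  pose proof HU as [Hpos Huc].
  pose proof (Hpos r e Hr He) as Hp.
  assert (HLi : 0 < / Lr <= 1/2).
  { split. apply Rinv_0_lt_compat; lra.
    replace (1/2) with (/2) by field. apply Rinv_le_contravar; lra. }
  assert (0 <= eta r e * r) by nra.
  destruct (Rle_lt_dec l (1/2)) as [Hl2|Hl2].
  - pose proof (conv_half d W eta HW HU x y a r e l Hr He ltac:(lra) Hxa Hya Hxy).
    assert (/ Lr * (eta r e * r) <= l * (eta r e * r)) by (apply Rmult_le_compat_r; lra).
    nra.
  - rewrite A3 by lra.
    assert (Hyx : d y x >= e * r) by (rewrite Hs; lra).
    pose proof (conv_half d W eta HW HU y x a r e (1-l) Hr He ltac:(lra) Hya Hxa Hyx).
    assert (/ Lr * (eta r e * r) <= (1-l) * (eta r e * r)) by (apply Rmult_le_compat_r; lra).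
    nra.
Qed.

Lemma KM_in {X} W T lam C (x : X) : convex_set W C -> (forall y, C y -> C (T y)) ->
  (forall n, 0 <= lam n <= 1) -> C x -> forall n, C (KM W T lam x n).
Proof. intros Hc HT Hl Hx n; induction n; simpl; auto. Qed.

Lemma step_T {X} (d : X -> X -> R) C T mu : metric_space d -> condition_E d C T mu -> 1 <= mu ->
  forall y p gamma, C y -> C p -> 0 <= gamma -> d p (T p) <= gamma ->
  d (T y) p <= d y p + mu * gamma.
Proof.
  intros Hm HE Hmu y p g Cy Cp Hg Hp. pose proof Hm as [Hd [Hs Ht]].
  pose proof (HE p y Cp Cy) as H. rewrite (Hs (T p) p) in H.
  assert (mu * d p (T p) <= mu * g) by (apply Rmult_le_compat_l; lra).
  rewrite (Hs (T y) p), (Hs y p). lra.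
Qed.

Lemma step_W {X} (d : X -> X -> R) W C T mu : W_hyperbolic d W -> condition_E d C T mu -> 1 <= mu ->
  forall y p gamma l, C y -> C p -> 0 <= gamma -> d p (T p) <= gamma -> 0 <= l <= 1 ->
  d (W y (T y) l) p <= d y p + mu * gamma.
Proof.
  intros HW HE Hmu y p g l Cy Cp Hg Hp Hl.
  pose proof HW as [Hm [A1 [A2 [A3 A4]]]]. pose proof Hm as [Hd [Hs Ht]].
  pose proof (step_T d C T mu Hm HE Hmu y p g Cy Cp Hg Hp) as H.
  pose proof (A1 y (T y) p l Hl) as H1. rewrite (Hs p y), (Hs p (T y)) in H1.
  rewrite Hs.
  assert (l * d (T y) p <= l * (d y p + mu * g)) by (apply Rmult_le_compat_l; lra).
  assert (0 <= (1 - l) * (mu * g)) by (apply Rmult_le_pos; nra).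
  nra.
Qed.

Lemma iter_ge (f : nat -> nat) : (forall n, (n <= f n)%nat) ->
  forall i j, (i <= j)%nat -> (Nat.iter i f 0 <= Nat.iter j f 0)%nat.
Proof. intros Hf i j H. induction H. lia. simpl. specialize (Hf (Nat.iter m f 0%nat)). lia. Qed.

Lemma nat_ceil_ge y : y <= INR (nat_ceil y).
Proof.
  unfold nat_ceil. pose proof (base_Int_part (-y)) as [H1 H2].
  destruct (Z_le_gt_dec 0 (- Int_part (- y))) as [Hz|Hz].
  - rewrite INR_IZR_INZ, Z2Nat.id by lia. rewrite opp_IZR. lra.
  - assert (IZR (- Int_part (-y)) < 0) by (apply IZR_lt; lia).
    rewrite opp_IZR in H. pose proof (pos_INR (Z.to_nat (- Int_part (- y)))). lra.
Qed.

Lemma core {X} (d : X -> X -> R) (T : X -> X) (C : X -> Prop) (s : nat -> X) (mu b delta : R) (k : nat) :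
  (forall x y, 0 <= d x y) -> 0 < mu -> 0 <= b -> 0 < delta ->
  (forall gamma, 0 < gamma -> exists p, C p /\ d (s 0%nat) p <= b /\ d p (T p) <= gamma) ->
  (forall p gamma n, C p -> 0 < gamma -> d p (T p) <= gamma -> d (s (S n)) p <= d (s n) p + mu * gamma) ->
  (forall p gamma n, C p -> 0 < gamma -> d p (T p) <= gamma -> d (s n) p + mu * gamma <= b + 1 ->
      / INR (S k) < d (s n) (T (s n)) -> d (s (S n)) p <= d (s n) p + mu * gamma - delta) ->
  forall (g : nat -> nat) (M : nat), b + 1 < INR (S M) * delta ->
  exists N, (N <= Nat.iter M (fun n => (g n + n + 1)%nat) 0)%nat /\
     forall m, (N <= m <= N + g N)%nat -> d (s m) (T (s m)) <= / INR (S k).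
Proof.
  intros Hn Hmu Hb Hdel Happ Hgen Hbad g M HM.
  set (h := fun n => (g n + n + 1)%nat).
  assert (Hh : forall n, (n <= h n)%nat) by (intro n; unfold h; lia).
  destruct (classic (exists i, (i <= M)%nat /\ forall m, (Nat.iter i h 0 <= m <= Nat.iter i h 0 + g (Nat.iter i h 0))%nat -> d (s m) (T (s m)) <= / INR (S k))) as [[i [Hi Hgood]] | Hno].
  - exists (Nat.iter i h 0%nat). split; [apply iter_ge; auto | exact Hgood].
  - exfalso.
    assert (Hbadi : forall i, (i <= M)%nat -> exists m, (Nat.iter i h 0 <= m <= Nat.iter i h 0 + g (Nat.iter i h 0))%nat /\ / INR (S k) < d (s m) (T (s m))).
    { intros i Hi. apply NNPP. intro Hc. apply Hno. exists i. split; auto. intros m Hm.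
      apply Rnot_lt_le. intro Hlt. apply Hc. exists m; auto. }
    set (P := Nat.iter (S M) h 0%nat).
    assert (HP0 : 0 <= INR P) by apply pos_INR.
    set (gamma := / (mu * (INR P + 1))).
    assert (Hgp : 0 < gamma) by (unfold gamma; apply Rinv_0_lt_compat; nra).
    assert (Hmg : mu * gamma = / (INR P + 1)) by (unfold gamma; field; lra).
    assert (Hu : 0 < / (INR P + 1)) by (apply Rinv_0_lt_compat; lra).
    assert (HPu : (INR P + 1) * / (INR P + 1) = 1) by (field; lra).
    destruct (Happ gamma Hgp) as [p [Cp [H0p Hp]]].
    set (f := fun n => d (s n) p - INR n * (mu * gamma)).
    assert (Hf1 : forall n, f (S n) <= f n).
    { intro n. unfold f. rewrite S_INR. pose proof (Hgen p gamma n Cp Hgp Hp). lra. }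
    assert (Hfm : forall n j, f (n + j)%nat <= f n).
    { intros n j; induction j. rewrite Nat.add_0_r; lra. rewrite Nat.add_succ_r. pose proof (Hf1 (n+j)%nat). lra. }
    assert (Hfle : forall n m, (n <= m)%nat -> f m <= f n).
    { intros n m H. replace m with (n + (m - n))%nat by lia. apply Hfm. }
    assert (Hfb : forall n, f n <= b).
    { intro n. pose proof (Hfle 0%nat n ltac:(lia)) as H. unfold f at 2 in H. simpl INR in H. lra. }
    assert (Hstep : forall i, (i <= S M)%nat -> f (Nat.iter i h 0%nat) <= b - INR i * delta).
    { induction i; intro Hi.
      - simpl. pose proof (Hfb 0%nat). lra.
      - destruct (Hbadi i ltac:(lia)) as [m [Hm Hbm]].
        assert (HnS : Nat.iter (S i) h 0%nat = (g (Nat.iter i h 0%nat) + Nat.iter i h 0%nat + 1)%nat) by reflexivity.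
        assert (HmP : (S m <= P)%nat).
        { unfold P. pose proof (iter_ge h Hh (S i) (S M) Hi). lia. }
        assert (Hrange : d (s m) p + mu * gamma <= b + 1).
        { pose proof (Hfb m) as H. unfold f in H.
          assert (HH : INR (S m) <= INR P) by (apply le_INR; lia). rewrite S_INR in HH.
          rewrite Hmg in *.
          assert ((INR m + 1) * / (INR P + 1) <= (INR P + 1) * / (INR P + 1))
            by (apply Rmult_le_compat_r; lra).
          lra. }
        pose proof (Hbad p gamma m Cp Hgp Hp Hrange Hbm) as Hb1.
        assert (f (S m) <= f m - delta) by (unfold f; rewrite S_INR; lra).
        assert (f (Nat.iter (S i) h 0%nat) <= f (S m)) by (apply Hfle; lia).
        assert (f m <= f (Nat.iter i h 0%nat)) by (apply Hfle; lia).
        pose proof (IHi ltac:(lia)). rewrite S_INR. lra. }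
    pose proof (Hstep (S M) (le_n _)) as H. fold P in H.
    unfold f in H. rewrite Hmg in H.
    pose proof (Hn (s P) p).
    assert (INR P * / (INR P + 1) < 1) by lra.
    lra.
Qed.

Theorem theorem7p15
  (X : Type) (d : X -> X -> R) (W : X -> X -> R -> X) (eta : R -> R -> R)
  (C : X -> Prop) (T : X -> X) (mu : R) (L : nat) (lam : nat -> R)
  (x : X) (b : R) :
  UCW_hyperbolic d W eta ->
  (exists c, C c) -> convex_set W C ->
  1 <= mu ->
  (forall y, C y -> C (T y)) -> condition_E d C T mu ->
  (2 <= L)%nat ->
  (forall n, / INR L <= lam n <= 1 - / INR L) ->
  C x ->
  0 < b ->
  (forall gamma, 0 < gamma -> exists p, C p /\ d x p <= b /\ d p (T p) <= gamma) ->
  (forall (k : nat) (g : nat -> nat),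
     exists N, (N <= Phi_plus b k L g eta)%nat /\
       forall m, (N <= m <= N + g N)%nat ->
         d (KM W T lam x m) (T (KM W T lam x m)) <= / INR (S k))
  /\
  (forall eta' : R -> R -> R,
     (forall r e, 0 < r -> 0 < e <= 2 -> 0 < eta' r e) ->
     (forall r e, 0 < r -> 0 < e <= 2 -> eta r e >= e * eta' r e) ->
     (forall r e e', 0 < r -> 0 < e <= e' -> e' <= 2 -> eta' r e <= eta' r e') ->
     forall (k : nat) (g : nat -> nat),
       exists N, (N <= Phi_plus b k L g eta')%nat /\
         forall m, (N <= m <= N + g N)%nat ->
           d (KM W T lam x m) (T (KM W T lam x m)) <= / INR (S k)).
Proof.
  intros [HW [HU Hmon]] Hne Hconv Hmu HT HE HL Hlam Hx Hb Happ.
  pose proof HW as [Hm _]. pose proof Hm as [Hd [Hs Ht]].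
  pose proof (d_nonneg d Hm) as Hn.
  pose proof HU as [Hpos Huc].
  set (Lr := INR L).
  assert (Lr2 : 2 <= Lr) by (unfold Lr; replace 2 with (INR 2) by (simpl; lra); apply le_INR; exact HL).
  assert (HLi : 0 < / Lr <= 1/2).
  { split. apply Rinv_0_lt_compat; lra.
    replace (1/2) with (/2) by field. apply Rinv_le_contravar; lra. }
  assert (Hlam01 : forall n, 0 <= lam n <= 1) by (intro n; specialize (Hlam n); fold Lr in Hlam; lra).
  pose proof (KM_in W T lam C x Hconv HT Hlam01 Hx) as HKMC.
  set (s := KM W T lam x).
  assert (Hgen : forall p gamma n, C p -> 0 < gamma -> d p (T p) <= gamma ->
     d (s (S n)) p <= d (s n) p + mu * gamma).
  { intros p gamma n Cp Hg Hp. unfold s; simpl.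
    apply (step_W d W C T mu HW HE Hmu); auto; lra. }
  assert (Hkey : forall p gamma n e, C p -> 0 < gamma -> d p (T p) <= gamma ->
     0 < e <= 2 -> e * (d (s n) p + mu * gamma) <= d (s n) (T (s n)) ->
     d (s (S n)) p <= (d (s n) p + mu * gamma)
         - 2 * / Lr * eta (d (s n) p + mu * gamma) e * (d (s n) p + mu * gamma)).
  { intros p gamma n e Cp Hg Hp He Hde. unfold s; simpl. fold s.
    pose proof (step_T d C T mu Hm HE Hmu (s n) p gamma (HKMC n) Cp ltac:(lra) Hp).
    pose proof (Hn (s n) p).
    assert (0 < mu * gamma) by nra.
    apply (conv_gen d W eta HW HU); auto; lra. }
  assert (H2r : forall p gamma n, C p -> 0 < gamma -> d p (T p) <= gamma ->
     d (s n) (T (s n)) <= 2 * (d (s n) p + mu * gamma)).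
  { intros p gamma n Cp Hg Hp.
    pose proof (step_T d C T mu Hm HE Hmu (s n) p gamma (HKMC n) Cp ltac:(lra) Hp).
    pose proof (Ht (s n) p (T (s n))). rewrite (Hs p (T (s n))) in H0.
    pose proof (Hn (s n) p). nra. }
  assert (Happ' : forall gamma, 0 < gamma -> exists p, C p /\ d (s 0%nat) p <= b /\ d p (T p) <= gamma)
    by exact Happ.
  assert (HK : forall k : nat, 1 <= INR (S k)) by (intro k; rewrite S_INR; pose proof (pos_INR k); lra).
  assert (Heps : forall k : nat, 0 < eps_arg b k <= 1/4 /\ eps_arg b k * (b + 1) = / (4 * INR (S k))).
  { intro k. pose proof (HK k). unfold eps_arg.
    assert (Hz : 4 <= 4 * INR (S k) * (b + 1)) by nra.
    set (z := 4 * INR (S k) * (b + 1)) in *.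
    assert (0 < / z) by (apply Rinv_0_lt_compat; lra).
    assert (/ z * z = 1) by (field; lra).
    assert (0 <= / z * (z - 4)) by (apply Rmult_le_pos; lra).
    split; [split; [lra|nra] | unfold z; field; nra]. }
  assert (Hceil : forall y, 0 <= INR (nat_ceil y) - y) by (intro y; pose proof (nat_ceil_ge y); lra).
  split.
  - intros k g.
    pose proof (HK k) as HKk. set (K := INR (S k)) in *.
    destruct (Heps k) as [[He0 He1] He2]. fold K in He2.
    set (e0 := eps_arg b k) in *.
    set (v := eta (b + 1) e0).
    assert (Hv : 0 < v) by (apply Hpos; lra).
    set (delta := 2 * / Lr * (v * / (2 * K))).
    assert (Hdel : 0 < delta).
    { unfold delta. assert (0 < / (2*K)) by (apply Rinv_0_lt_compat; lra).
      assert (0 < / Lr) by lra. assert (0 < v * / (2*K)) by nra. nra. }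
    unfold Phi_plus. cbv zeta.
    fold e0. fold v.
    set (th := theta_val k L v).
    set (M := nat_ceil (3 * (b + 1) / th)).
    apply (core d T C s mu b delta k Hn ltac:(lra) ltac:(lra) Hdel Happ' Hgen).
    + intros p gamma n Cp Hg Hp Hr Hbad. fold K in Hbad.
      pose proof (H2r p gamma n Cp Hg Hp).
      set (r := d (s n) p + mu * gamma) in *.
      assert (Hr0 : / (2 * K) <= r).
      { assert (/ (2*K) = / 2 * / K) by (field; lra). lra. }
      assert (HrP : 0 < r) by (assert (0 < / (2*K)) by (apply Rinv_0_lt_compat; lra); lra).
      assert (He0r : e0 * r <= d (s n) (T (s n))).
      { assert (e0 * r <= e0 * (b+1)) by (apply Rmult_le_compat_l; lra).
        assert (/ (4 * K) <= / K) by (apply Rinv_le_contravar; lra). lra. }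
      pose proof (Hkey p gamma n e0 Cp Hg Hp ltac:(lra) He0r) as Hk. fold r in Hk.
      assert (Hme : v <= eta r e0) by (apply Hmon; lra).
      assert (v * / (2*K) <= eta r e0 * r).
      { apply Rmult_le_compat; try lra. apply Rlt_le, Rinv_0_lt_compat; lra. }
      assert (2 * / Lr * (v * / (2*K)) <= 2 * / Lr * (eta r e0 * r))
        by (apply Rmult_le_compat_l; lra).
      unfold delta. lra.
    + assert (Hth : th = / (4 * K * Lr ^ 2) * v) by reflexivity.
      pose proof (Hceil (3 * (b + 1) / th)) as Hc. fold M in Hc.
      assert (3 * (b + 1) / th * delta = 12 * (b + 1) * Lr).
      { rewrite Hth. unfold delta. field. repeat split; lra. }
      rewrite S_INR.
      assert (INR M * delta >= 3 * (b + 1) / th * delta) by (apply Rmult_ge_compat_r; lra).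
      nra.
  - intros eta' Hp' Hge Hinc k g.
    pose proof (HK k) as HKk. set (K := INR (S k)) in *.
    destruct (Heps k) as [[He0 He1] He2]. fold K in He2.
    set (e0 := eps_arg b k) in *.
    set (v := eta' (b + 1) e0).
    assert (Hv : 0 < v) by (apply Hp'; lra).
    set (delta := 2 * / Lr * (v * / K)).
    assert (Hdel : 0 < delta).
    { unfold delta. assert (0 < / K) by (apply Rinv_0_lt_compat; lra).
      assert (0 < / Lr) by lra. assert (0 < v * / K) by nra. nra. }
    unfold Phi_plus. cbv zeta.
    fold e0. fold v.
    set (th := theta_val k L v).
    set (M := nat_ceil (3 * (b + 1) / th)).
    apply (core d T C s mu b delta k Hn ltac:(lra) ltac:(lra) Hdel Happ' Hgen).
    + intros p gamma n Cp Hg Hp Hr Hbad. fold K in Hbad.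
      pose proof (H2r p gamma n Cp Hg Hp).
      set (r := d (s n) p + mu * gamma) in *.
      assert (Hr0 : / (2 * K) <= r).
      { assert (/ (2*K) = / 2 * / K) by (field; lra). lra. }
      assert (HrP : 0 < r) by (assert (0 < / (2*K)) by (apply Rinv_0_lt_compat; lra); lra).
      set (e := / (K * r)).
      assert (Her : e * r = / K) by (unfold e; field; lra).
      assert (HeP : 0 < e) by (unfold e; apply Rinv_0_lt_compat; nra).
      assert (He2' : e <= 2).
      { unfold e. assert (1/2 <= K * r).
        { assert (K * / (2*K) = 1/2) by (field; lra).
          assert (K * / (2*K) <= K * r) by (apply Rmult_le_compat_l; lra). lra. }
        replace 2 with (/ (1/2)) by field. apply Rinv_le_contravar; lra. }
      assert (He0e : e0 <= e).
      { unfold e0, eps_arg, e. fold K. apply Rinv_le_contravar. nra.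
        assert (K * r <= K * (b+1)) by (apply Rmult_le_compat_l; lra). nra. }
      assert (Hder : e * r <= d (s n) (T (s n))) by lra.
      pose proof (Hkey p gamma n e Cp Hg Hp ltac:(lra) Hder) as Hk. fold r in Hk.
      assert (H1 : eta (b+1) e <= eta r e) by (apply Hmon; lra).
      assert (H2 : eta (b+1) e >= e * eta' (b+1) e) by (apply Hge; lra).
      assert (H3 : v <= eta' (b+1) e) by (apply Hinc; lra).
      assert (H4 : e * v <= e * eta' (b+1) e) by (apply Rmult_le_compat_l; lra).
      assert (v * / K <= eta r e * r).
      { rewrite <- Her.
        assert (e * v * r <= eta r e * r) by (apply Rmult_le_compat_r; lra). nra. }
      assert (2 * / Lr * (v * / K) <= 2 * / Lr * (eta r e * r))
        by (apply Rmult_le_compat_l; lra).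
      unfold delta. lra.
    + assert (Hth : th = / (4 * K * Lr ^ 2) * v) by reflexivity.
      pose proof (Hceil (3 * (b + 1) / th)) as Hc. fold M in Hc.
      assert (3 * (b + 1) / th * delta = 24 * (b + 1) * Lr).
      { rewrite Hth. unfold delta. field. repeat split; lra. }
      rewrite S_INR.
      assert (INR M * delta >= 3 * (b + 1) / th * delta) by (apply Rmult_ge_compat_r; lra).
      nra.
Qed.
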